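(* Let $D=I\times[c-b,c+b]$ with $I$ a closed interval and $b>0$, and let $g_{[0]}=g_{[0]ij}du^i\otimes du^j$ be a Riemannian metric on $D$ (the reference state $M_{[0]}$, e.g. induced by a parametrization $\boldsymbol p_{[0]}:D\to\mathbb{E}^3$ of a surface). Let $C$ be the center curve $u^2=c$, let $s_{[0]}(u^1)=\sqrt{g_{[0]11}(u^1,c)}$ be its speed, and let $\kappa_{[0]}(u^1)$ be its geodesic curvature in $(D,g_{[0]})$. Let $\boldsymbol c_{[s]}:I\to\mathbb{R}^2$ be a solution of the ODE $$\ddot{\boldsymbol c}_{[s]}=\begin{pmatrix}\dot s_{[0]}/s_{[0]} & -\kappa_{[0]}s_{[0]}\\ \kappa_{[0]}s_{[0]} & \dot s_{[0]}/s_{[0]}\end{pmatrix}\dot{\boldsymbol c}_{[s]},\qquad \|\dot{\boldsymbol c}_{[s]}\|=s_{[0]},$$ where the dot denotes $d/du^1$, and define $\boldsymbol p_{[s]}:D\to\mathbb{R}^2$ by $$\boldsymbol p_{[s]}(u^1,u^2)=\boldsymbol c_{[s]}(u^1)+\begin{pmatrix}g_{[0]12}(u^1,c) & -\sqrt{\det_{i,j} g_{[0]ij}(u^1,c)}\\ \sqrt{\det_{i,j} g_{[0]ij}(u^1,c)} & g_{[0]12}(u^1,c)\end{pmatrix}\frac{(u^2-c)\,\dot{\boldsymbol c}_{[s]}(u^1)}{g_{[0]11}(u^1,c)},$$ and $M_{[s]}=\{\boldsymbol p_{[s]}(u^1,u^2):(u^1,u^2)\in D\}$. Then $M_{[s]}$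 satisfies: (a-1) the induced metric $g_{[s]ij}=\partial_i\boldsymbol p_{[s]}\cdot\partial_j\boldsymbol p_{[s]}$ coincides with $g_{[0]ij}$ on the center curve, i.e. $g_{[s]ij}(u^1,c)=g_{[0]ij}(u^1,c)$; (a-2) the planar curvature $\kappa_{[s]}$ of the center curve $\boldsymbol c_{[s]}(u^1)=\boldsymbol p_{[s]}(u^1,c)$ equals $\kappa_{[0]}$; (a-3) $\frac{\partial}{\partial u^2}\frac{\partial\boldsymbol p_{[s]}}{\partial u^2}=\boldsymbol 0$.
   Context: For a plane curve $\boldsymbol c$ with speed $s=\|\dot{\boldsymbol c}\|$, set $\boldsymbol e_1=\dot{\boldsymbol c}/s$ and $\boldsymbol e_2=\begin{pmatrix}0&-1\\1&0\end{pmatrix}\boldsymbol e_1$; its planar curvature $\kappa$ is defined by $\dot{\boldsymbol e}_1=s\kappa\boldsymbol e_2$. The geodesic curvature $\kappa_{[0]}$ of the center curve is taken with the sign convention given by the orientation of the coordinates $(u^1,u^2)$ (the unit normal is the one making a positively oriented orthonormal frame with the unit tangent). *)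

(* Defs.v *)
From Stdlib Require Import Reals.
From Coquelicot Require Import Coquelicot.
Open Scope R_scope.

(** * Coordinates (u^1,u^2) on R^2; indices are the naturals 1 and 2. *)

Definition pd (k : nat) (f : R -> R -> R) (x y : R) : R :=
  match k with
  | 1%nat => Derive (fun t => f t y) x
  | _ => Derive (fun t => f x t) y
  end.

Definition ex_pd (k : nat) (f : R -> R -> R) (x y : R) : Prop :=
  match k with
  | 1%nat => ex_derive (fun t => f t y) x
  | _ => ex_derive (fun t => f x t) y
  end.

Fixpoint pderivs (l : list nat) (f : R -> R -> R) : R -> R -> R :=
  match l with
  | nil => f
  | cons k l' => pd k (pderivs l' f)
  end.

Definition smooth2 (f : R -> R -> R) : Prop :=
  forall (l : list nat) (x y : R),
    ex_pd 1 (pderivs l f) x y /\ ex_pd 2 (pderivs l f) x y.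

Definition sum2 (F : nat -> R) : R := F 1%nat + F 2%nat.

Definition gcomp (g11 g12 g22 : R -> R -> R) (i j : nat) : R -> R -> R :=
  match i, j with
  | 1%nat, 1%nat => g11
  | 2%nat, 2%nat => g22
  | _, _ => g12
  end.

Definition detg (g11 g12 g22 : R -> R -> R) (x y : R) : R :=
  g11 x y * g22 x y - g12 x y ^ 2.

Definition ginv (g11 g12 g22 : R -> R -> R) (k l : nat) (x y : R) : R :=
  match k, l with
  | 1%nat, 1%nat => g22 x y / detg g11 g12 g22 x y
  | 2%nat, 2%nat => g11 x y / detg g11 g12 g22 x y
  | _, _ => - g12 x y / detg g11 g12 g22 x y
  end.

Definition christoffel (g11 g12 g22 : R -> R -> R) (k i j : nat) (x y : R) : R :=
  / 2 * sum2 (fun l => ginv g11 g12 g22 k l x y *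
     (pd i (gcomp g11 g12 g22 j l) x y + pd j (gcomp g11 g12 g22 i l) x y
      - pd l (gcomp g11 g12 g22 i j) x y)).

Definition gmet (g11 g12 g22 : R -> R -> R) (x y : R) (v w : nat -> R) : R :=
  sum2 (fun i => sum2 (fun j => gcomp g11 g12 g22 i j x y * v i * w j)).

Definition vel (gam : nat -> R -> R) (t : R) : nat -> R :=
  fun k => Derive (gam k) t.

Definition covacc (g11 g12 g22 : R -> R -> R) (gam : nat -> R -> R) (t : R)
  : nat -> R :=
  fun k => Derive (fun s => Derive (gam k) s) t +
    sum2 (fun i => sum2 (fun j =>
      christoffel g11 g12 g22 k i j (gam 1%nat t) (gam 2%nat t)
      * vel gam t i * vel gam t j)).

(** The unit normal n such that (unit tangent, n) is a positively oriented
    (w.r.t. the coordinates (u^1,u^2)) g-orthonormal frame. *)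
Definition unit_normal (g11 g12 g22 : R -> R -> R) (gam : nat -> R -> R) (t : R)
  : nat -> R :=
  let x := gam 1%nat t in let y := gam 2%nat t in
  let v := vel gam t in
  let nrm := sqrt (detg g11 g12 g22 x y) * sqrt (gmet g11 g12 g22 x y v v) in
  fun k => match k with
  | 1%nat => - (g12 x y * v 1%nat + g22 x y * v 2%nat) / nrm
  | _ => (g11 x y * v 1%nat + g12 x y * v 2%nat) / nrm
  end.

Definition geodesic_curvature (g11 g12 g22 : R -> R -> R) (gam : nat -> R -> R)
  (t : R) : R :=
  let x := gam 1%nat t in let y := gam 2%nat t in
  gmet g11 g12 g22 x y (covacc g11 g12 g22 gam t) (unit_normal g11 g12 g22 gam t)
  / gmet g11 g12 g22 x y (vel gam t) (vel gam t).

Definition center_curve (c : R) : nat -> R -> R :=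
  fun k => match k with 1%nat => fun t => t | _ => fun _ => c end.

Definition kappa0 (g11 g12 g22 : R -> R -> R) (c u : R) : R :=
  geodesic_curvature g11 g12 g22 (center_curve c) u.

Definition s0 (g11 : R -> R -> R) (c u : R) : R := sqrt (g11 u c).

Definition pspeed (cx cy : R -> R) (t : R) : R :=
  sqrt (Derive cx t ^ 2 + Derive cy t ^ 2).

(** kappa is the planar curvature at t: s > 0 and  e1' = s kappa e2,
    e1 = c'/s, e2 = J e1 = (- e1_y, e1_x). *)
Definition has_planar_curvature (cx cy : R -> R) (k t : R) : Prop :=
  0 < pspeed cx cy t /\
  is_derive (fun s => Derive cx s / pspeed cx cy s) t
    (pspeed cx cy t * k * (- (Derive cy t / pspeed cx cy t))) /\
  is_derive (fun s => Derive cy s / pspeed cx cy s) t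
    (pspeed cx cy t * k * (Derive cx t / pspeed cx cy t)).

Definition pS (g11 g12 g22 : R -> R -> R) (c : R) (cx cy : R -> R) (m : nat)
  : R -> R -> R :=
  fun u1 u2 =>
  let sd := sqrt (detg g11 g12 g22 u1 c) in
  match m with
  | 1%nat => cx u1 + (g12 u1 c * Derive cx u1 - sd * Derive cy u1) * (u2 - c) / g11 u1 c
  | _ => cy u1 + (sd * Derive cx u1 + g12 u1 c * Derive cy u1) * (u2 - c) / g11 u1 c
  end.

Definition gS (g11 g12 g22 : R -> R -> R) (c : R) (cx cy : R -> R) (i j : nat)
  (u1 u2 : R) : R :=
  sum2 (fun m => pd i (pS g11 g12 g22 c cx cy m) u1 u2 *
                 pd j (pS g11 g12 g22 c cx cy m) u1 u2).

(* Main.v *)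
Require Import Defs.
From Stdlib Require Import Reals Lra FunctionalExtensionality.
From Coquelicot Require Import Coquelicot.
Open Scope R_scope.

Lemma dlin (A B G c y : R) : is_derive (fun t => A + B*(t-c)/G) y (B/G).
Proof.
  unfold Rdiv.
  assert (H : is_derive (fun t => A + B*(t-c)*/G) y (0 + B*(1-0)*/G)).
  { auto_derive. auto. ring. }
  replace (B*/G) with (0 + B*(1-0)*/G) by ring. exact H.
Qed.

Lemma pS_c1 g11 g12 g22 c cx cy : (fun t => pS g11 g12 g22 c cx cy 1 t c) = cx.
Proof.
  apply functional_extensionality; intro t; unfold pS; simpl.
  replace (c - c) with 0 by ring. unfold Rdiv. ring.
Qed.

Lemma pS_c2 g11 g12 g22 c cx cy : (fun t => pS g11 g12 g22 c cx cy 2 t c) = cy.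
Proof.
  apply functional_extensionality; intro t; unfold pS; simpl.
  replace (c - c) with 0 by ring. unfold Rdiv. ring.
Qed.

Lemma pd2_pS g11 g12 g22 c cx cy m u1 u2 : (m = 1%nat \/ m = 2%nat) ->
  is_derive (fun t => pS g11 g12 g22 c cx cy m u1 t) u2
   (match m with
    | 1%nat => (g12 u1 c * Derive cx u1 - sqrt (detg g11 g12 g22 u1 c) * Derive cy u1) / g11 u1 c
    | _ => (sqrt (detg g11 g12 g22 u1 c) * Derive cx u1 + g12 u1 c * Derive cy u1) / g11 u1 c
    end).
Proof.
  intros [-> | ->]; unfold pS; simpl; apply dlin.
Qed.

Theorem mainTheorem3 (a1 a2 b c : R) (g11 g12 g22 : R -> R -> R) (cx cy : R -> R) :
  0 < b ->
  smooth2 g11 -> smooth2 g12 -> smooth2 g22 ->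
  (forall u1 u2, a1 <= u1 <= a2 -> c - b <= u2 <= c + b ->
     0 < g11 u1 u2 /\ 0 < detg g11 g12 g22 u1 u2) ->
  (forall u, a1 <= u <= a2 ->
     ex_derive cx u /\ ex_derive cy u /\
     ex_derive (Derive cx) u /\ ex_derive (Derive cy) u) ->
  (forall u, a1 <= u <= a2 ->
     Derive (Derive cx) u =
       Derive (s0 g11 c) u / s0 g11 c u * Derive cx u
       - kappa0 g11 g12 g22 c u * s0 g11 c u * Derive cy u /\
     Derive (Derive cy) u =
       kappa0 g11 g12 g22 c u * s0 g11 c u * Derive cx u
       + Derive (s0 g11 c) u / s0 g11 c u * Derive cy u) ->
  (forall u, a1 <= u <= a2 -> pspeed cx cy u = s0 g11 c u) ->
  (* (a-1) *)
  (forall u1, a1 <= u1 <= a2 ->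
     (forall i m, (i = 1%nat \/ i = 2%nat) -> (m = 1%nat \/ m = 2%nat) ->
        ex_pd i (pS g11 g12 g22 c cx cy m) u1 c) /\
     (forall i j, (i = 1%nat \/ i = 2%nat) -> (j = 1%nat \/ j = 2%nat) ->
        gS g11 g12 g22 c cx cy i j u1 c = gcomp g11 g12 g22 i j u1 c)) /\
  (* (a-2) *)
  (forall u1, a1 <= u1 <= a2 ->
     has_planar_curvature (fun t => pS g11 g12 g22 c cx cy 1 t c)
                          (fun t => pS g11 g12 g22 c cx cy 2 t c)
                          (kappa0 g11 g12 g22 c u1) u1) /\
  (* (a-3) *)
  (forall u1 u2, a1 <= u1 <= a2 -> c - b <= u2 <= c + b ->
     forall m, (m = 1%nat \/ m = 2%nat) ->
       ex_pd 2 (pS g11 g12 g22 c cx cy m) u1 u2 /\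
       ex_pd 2 (pd 2 (pS g11 g12 g22 c cx cy m)) u1 u2 /\
       pd 2 (pd 2 (pS g11 g12 g22 c cx cy m)) u1 u2 = 0).
Proof.
  intros Hb _ _ _ Hpos Hex Hode Hsp.
  assert (Hcb : c - b <= c <= c + b) by lra.
  split; [|split].
  - intros u1 Hu. destruct (Hpos u1 c Hu Hcb) as [Hg Hd].
    destruct (Hex u1 Hu) as [Ex [Ey _]].
    split.
    + intros i m Hi Hm. destruct Hi as [-> | ->].
      * destruct Hm as [-> | ->];
          [change (ex_derive (fun t => pS g11 g12 g22 c cx cy 1 t c) u1); rewrite pS_c1
          |change (ex_derive (fun t => pS g11 g12 g22 c cx cy 2 t c) u1); rewrite pS_c2]; assumption.
      * change (ex_derive (fun t => pS g11 g12 g22 c cx cy m u1 t) c). eexists. apply pd2_pS; exact Hm.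
    + assert (D11 : pd 1 (pS g11 g12 g22 c cx cy 1) u1 c = Derive cx u1)
        by (change (Derive (fun t => pS g11 g12 g22 c cx cy 1 t c) u1 = Derive cx u1); rewrite pS_c1; reflexivity).
      assert (D12 : pd 1 (pS g11 g12 g22 c cx cy 2) u1 c = Derive cy u1)
        by (change (Derive (fun t => pS g11 g12 g22 c cx cy 2 t c) u1 = Derive cy u1); rewrite pS_c2; reflexivity).
      set (X := Derive cx u1) in *. set (Y := Derive cy u1) in *.
      set (sd := sqrt (detg g11 g12 g22 u1 c)) in *.
      assert (HXY : X^2 + Y^2 = g11 u1 c).
      { specialize (Hsp u1 Hu). unfold pspeed, s0 in Hsp.
        apply sqrt_inj; [nra | lra | exact Hsp]. }
      assert (Hsd : sd * sd = g11 u1 c * g22 u1 c - g12 u1 c ^ 2).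
      { unfold sd. rewrite sqrt_sqrt by lra. reflexivity. }
      assert (Hg0 : g11 u1 c <> 0) by lra.
      assert (D21 : Derive (fun t => cx u1 + (g12 u1 c * X - sd * Y) * (t - c) / g11 u1 c) c = (g12 u1 c * X - sd * Y)/g11 u1 c)
        by (apply is_derive_unique, dlin).
      assert (D22 : Derive (fun t => cy u1 + (sd * X + g12 u1 c * Y) * (t - c) / g11 u1 c) c = (sd * X + g12 u1 c * Y)/g11 u1 c)
        by (apply is_derive_unique, dlin).
      assert (HXY' : X*X + Y*Y = g11 u1 c) by (rewrite <- HXY; ring).
      intros i j Hi Hj. unfold gS, sum2.
      destruct Hi as [-> | ->]; destruct Hj as [-> | ->];
        rewrite ?D11, ?D12; simpl; fold X Y sd; rewrite ?D21, ?D22.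
      * exact HXY'.
      * replace (X * ((g12 u1 c * X - sd * Y) / g11 u1 c) + Y * ((sd * X + g12 u1 c * Y) / g11 u1 c))
          with (g12 u1 c * (X*X+Y*Y) / g11 u1 c) by (field; auto).
        rewrite HXY'. field; auto.
      * replace ((g12 u1 c * X - sd * Y) / g11 u1 c * X + (sd * X + g12 u1 c * Y) / g11 u1 c * Y)
          with (g12 u1 c * (X*X+Y*Y) / g11 u1 c) by (field; auto).
        rewrite HXY'. field; auto.
      * replace ((g12 u1 c * X - sd * Y) / g11 u1 c * ((g12 u1 c * X - sd * Y) / g11 u1 c) +
                 (sd * X + g12 u1 c * Y) / g11 u1 c * ((sd * X + g12 u1 c * Y) / g11 u1 c))
          with ((g12 u1 c ^ 2 + sd * sd) * (X*X+Y*Y) / (g11 u1 c * g11 u1 c)) by (field; auto).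
        rewrite HXY', Hsd. field; auto.
  - intros u1 Hu. rewrite pS_c1, pS_c2.
    destruct (Hpos u1 c Hu Hcb) as [Hg Hd].
    destruct (Hex u1 Hu) as [Ex [Ey [Exx Eyy]]].
    destruct (Hode u1 Hu) as [Ox Oy].
    assert (Hs := Hsp u1 Hu).
    set (s := s0 g11 c u1) in *. set (s' := Derive (s0 g11 c) u1) in *.
    set (k := kappa0 g11 g12 g22 c u1) in *.
    assert (Hs0 : 0 < s) by (unfold s, s0; apply sqrt_lt_R0; lra).
    set (X := Derive cx u1) in *. set (Y := Derive cy u1) in *.
    set (X2 := Derive (Derive cx) u1) in *. set (Y2 := Derive (Derive cy) u1) in *.
    assert (HXY : X^2 + Y^2 = s^2).
    { unfold pspeed in Hs. fold X Y in Hs. rewrite <- Hs. rewrite pow2_sqrt; nra. }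
    assert (DX : is_derive (Derive cx) u1 X2) by (apply Derive_correct; auto).
    assert (DY : is_derive (Derive cy) u1 Y2) by (apply Derive_correct; auto).
    assert (DP : is_derive (pspeed cx cy) u1 ((X*X2 + Y*Y2)/s)).
    { unfold pspeed.
      assert (H1 : is_derive (fun t => Derive cx t ^ 2 + Derive cy t ^ 2) u1
                     (2 * X * X2 + 2 * Y * Y2)).
      { apply (is_derive_plus (fun t => Derive cx t ^ 2) (fun t => Derive cy t ^ 2)).
        - eapply is_derive_ext; [intro t; reflexivity|].
          replace (2 * X * X2) with (INR 2 * X2 * X ^ (pred 2)) by (simpl; ring).
          apply (is_derive_pow (Derive cx) 2). exact DX.
        - replace (2 * Y * Y2) with (INR 2 * Y2 * Y ^ (pred 2)) by (simpl; ring).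
          apply (is_derive_pow (Derive cy) 2). exact DY. }
      assert (H2 := is_derive_sqrt _ _ _ H1 ltac:(cbv beta; fold X Y; rewrite HXY; nra)).
      cbv beta in H2; fold X Y in H2. unfold pspeed in Hs. fold X Y in Hs. rewrite Hs in H2.
      replace ((X*X2 + Y*Y2)/s) with ((2 * X * X2 + 2 * Y * Y2) / (2 * s)) by (field; lra).
      exact H2. }
    assert (Hkey : X*X2 + Y*Y2 = s' * s).
    { rewrite Ox, Oy.
      replace (X * (s' / s * X - k * s * Y) + Y * (k * s * X + s' / s * Y))
        with (s'/s * (X^2+Y^2)) by (field; lra).
      rewrite HXY. field; lra. }
    unfold has_planar_curvature. rewrite Hs. fold X Y.
    split; [exact Hs0|split].
    + assert (H := is_derive_div _ _ _ _ _ DX DP ltac:(rewrite Hs; lra)).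
      rewrite Hs, Hkey, Ox in H. fold X in H.
      replace (s * k * - (Y / s)) with
        (((s' / s * X - k * s * Y) * s - X * (s' * s / s)) / s ^ 2) by (field; lra).
      exact H.
    + assert (H := is_derive_div _ _ _ _ _ DY DP ltac:(rewrite Hs; lra)).
      rewrite Hs, Hkey, Oy in H. fold Y in H.
      replace (s * k * (X / s)) with
        (((k * s * X + s' / s * Y) * s - Y * (s' * s / s)) / s ^ 2) by (field; lra).
      exact H.
  - intros u1 u2 Hu Hu2 m Hm.
    split; [|split].
    + simpl. eexists. apply pd2_pS; exact Hm.
    + simpl. eexists.
      eapply is_derive_ext; [|apply is_derive_const].
      intro t. symmetry. apply is_derive_unique. apply pd2_pS; exact Hm.
    + simpl. rewrite (Derive_ext _ (fun _ => match m with
    | 1%nat => (g12 u1 c * Derive cx u1 - sqrt (detg g11 g12 g22 u1 c) * Derive cy u1) / g11 u1 c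
    | _ => (sqrt (detg g11 g12 g22 u1 c) * Derive cx u1 + g12 u1 c * Derive cy u1) / g11 u1 c
    end)).
      * apply Derive_const.
      * intro t. apply is_derive_unique. apply pd2_pS; exact Hm.
Qed.
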